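(* For $k\in\mathbb{N}$ let $B(k)=\dfrac{2}{3}\cdot\dfrac{k-1}{(2k+1)!}$. (i) For every $x\in(0,\pi/2)$ and every $n\in\mathbb{N}$, $$\sum_{k=2}^{2n}(-1)^{k+1}B(k)\,x^{2k}<\frac{\sin x}{x}-\frac{\cos x+2}{3}<\sum_{k=2}^{2n+1}(-1)^{k+1}B(k)\,x^{2k}.$$ (ii) For every $x\in(0,\pi/2)$ and every $m\in\mathbb{N}$, $$\Big|\frac{\sin x}{x}-\frac{\cos x+2}{3}-\sum_{k=2}^{m}(-1)^{k+1}B(k)\,x^{2k}\Big|<B(m+1)\,x^{2m+2},$$ where the sum is empty (equal to $0$) when $m=1$.
   Context: $\mathbb{N}=\{1,2,3,\dots\}$. *)

(* Defs.v *)
From Stdlib Require Import Reals Arith Factorial.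
Open Scope R_scope.

Definition B (k : nat) : R := 2 / 3 * (INR k - 1) / INR (fact (2 * k + 1)).

Definition term (x : R) (k : nat) : R := (-1) ^ (k + 1) * B k * x ^ (2 * k).

Fixpoint Ssum (x : R) (N : nat) : R :=
  match N with
  | O => 0
  | Datatypes.S N' => if Nat.leb 2 N then Ssum x N' + term x N else 0
  end.

(* Main.v *)
Require Import Defs.
From Stdlib Require Import Reals.
From Stdlib Require Import Arith Factorial Lra Lia Psatz.
Open Scope R_scope.

Lemma Un_cv_ext (u v : nat -> R) l : (forall n, u n = v n) -> Un_cv u l -> Un_cv v l.
Proof. intros E H eps He; destruct (H eps He) as [N HN]; exists N; intros n Hn; rewrite <- E; auto. Qed.

Lemma fact_S2 i : INR (fact (2 * S i + 1)) =
  (2 * INR i + 3) * (2 * INR i + 2) * INR (fact (2 * i + 1)).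
Proof.
  replace (2 * S i + 1)%nat with (S (S (2 * i + 1))) by lia.
  change (fact (S (S (2 * i + 1)))) with (S (S (2*i+1)) * (S (2*i+1) * fact (2*i+1)))%nat.
  rewrite !mult_INR, !S_INR, plus_INR, mult_INR. simpl. ring.
Qed.

Lemma term_eq x i : term x i = sin_n i * (Rsqr x) ^ i - / 3 * (cos_n i * (Rsqr x) ^ i).
Proof.
  unfold term, B, sin_n, cos_n, Rsqr.
  replace (x ^ (2 * i)) with ((x * x) ^ i) by (rewrite pow_mult; f_equal; ring).
  replace (2 * i + 1)%nat with (S (2 * i)) by lia.
  change (fact (S (2 * i))) with (S (2 * i) * fact (2 * i))%nat.
  rewrite mult_INR, S_INR, mult_INR, pow_add. simpl (INR 2).
  assert (F := INR_fact_neq_0 (2 * i)).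
  assert (0 <= INR i) by apply pos_INR.
  field. split; auto. lra.
Qed.

Lemma series_cv x : x <> 0 ->
  Un_cv (fun n => sum_f_R0 (term x) n) (sin x / x - / 3 * cos x).
Proof.
  intro Hx.
  assert (Hs : Un_cv (fun n => sum_f_R0 (fun i => sin_n i * (Rsqr x) ^ i) n) (sin x / x)).
  { unfold sin. destruct (exist_sin (Rsqr x)) as [a Ha].
    replace (x * a / x) with a by (field; auto). exact Ha. }
  assert (Hc : Un_cv (fun n => sum_f_R0 (fun i => cos_n i * (Rsqr x) ^ i) n) (cos x)).
  { unfold cos. destruct (exist_cos (Rsqr x)) as [a Ha]. exact Ha. }
  assert (Hk : Un_cv (fun _ : nat => / 3) (/ 3)).
  { intros e He; exists O; intros; unfold Rdist; rewrite Rminus_diag, Rabs_R0; lra. }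
  assert (H := CV_minus _ _ _ _ Hs (CV_mult _ _ _ _ Hk Hc)).
  refine (Un_cv_ext _ _ _ _ H).
  intro n; simpl. symmetry. induction n.
  - simpl. rewrite term_eq. ring.
  - simpl. rewrite IHn, term_eq. cbn [pow]. ring.
Qed.

Lemma Ssum_eq x m : (1 <= m)%nat -> Ssum x m = sum_f_R0 (term x) m - 2 / 3.
Proof.
  intro Hm. induction m. lia.
  destruct m.
  - simpl. unfold term, B. simpl. field.
  - change (Ssum x (S (S m))) with (if Nat.leb 2 (S (S m)) then Ssum x (S m) + term x (S (S m)) else 0).
    simpl (Nat.leb 2 (S (S m))). rewrite IHm by lia. simpl. ring.
Qed.

Lemma neg1_sq m : (-1) ^ m * (-1) ^ m = 1.
Proof. induction m; simpl. ring. replace (-1 * (-1) ^ m * (-1 * (-1) ^ m)) with ((-1) ^ m * (-1) ^ m) by ring. exact IHm. Qed.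

Definition a x i := B i * x ^ (2 * i).

Lemma a_pos x i : 0 < x -> (2 <= i)%nat -> 0 < a x i.
Proof.
  intros Hx Hi. unfold a, B. apply Rmult_lt_0_compat; [|apply pow_lt; auto].
  assert (1 < INR i). { replace 1 with (INR 1) by reflexivity. apply lt_INR. lia. }
  assert (0 < INR (fact (2 * i + 1))) by apply INR_fact_lt_0.
  unfold Rdiv. apply Rmult_lt_0_compat; [|apply Rinv_0_lt_compat; auto]. lra.
Qed.

Lemma a_dec x i : 0 < x < 2 -> (2 <= i)%nat -> a x (S i) < a x i.
Proof.
  intros Hx Hi. unfold a, B. rewrite fact_S2, S_INR.
  replace (2 * S i)%nat with (2 * i + 2)%nat by lia. rewrite pow_add.
  assert (I : 2 <= INR i). { replace 2 with (INR 2) by (simpl; ring). apply le_INR. lia. }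
  assert (F : 0 < INR (fact (2 * i + 1))) by apply INR_fact_lt_0.
  assert (P : 0 < x ^ (2 * i)) by (apply pow_lt; lra).
  set (X := x ^ (2 * i)) in *. set (Fi := INR (fact (2 * i + 1))) in *. set (I' := INR i) in *.
  simpl (x ^ 2).
  assert (x * (x * 1) < 4) by nra.
  assert (Q : 0 < (2 * I' + 3) * (2 * I' + 2) * Fi).
  { apply Rmult_lt_0_compat; [|lra]. nra. }
  apply Rmult_lt_compat_r with (r := (2 * I' + 3) * (2 * I' + 2) * Fi) in P as P0; [|exact Q].
  apply (Rmult_lt_reg_r ((2 * I' + 3) * (2 * I' + 2) * Fi)); [exact Q|].
  replace (2 / 3 * (I' + 1 - 1) / ((2 * I' + 3) * (2 * I' + 2) * Fi) * (X * (x * (x * 1))) *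
      ((2 * I' + 3) * (2 * I' + 2) * Fi)) with (2 / 3 * I' * X * (x * (x * 1))) by (field; lra).
  replace (2 / 3 * (I' - 1) / Fi * X * ((2 * I' + 3) * (2 * I' + 2) * Fi))
    with (2 / 3 * X * ((I' - 1) * (2 * I' + 3) * (2 * I' + 2))) by (field; lra).
  assert (I' * (x * (x * 1)) < (I' - 1) * (2 * I' + 3) * (2 * I' + 2)) by nra.
  nra.
Qed.

Lemma term_a x i : term x i = (-1) ^ (i + 1) * a x i.
Proof. unfold term, a. ring. Qed.

Lemma tail_lower x m : 0 < x < 2 -> (1 <= m)%nat ->
  a x (m + 1) - a x (m + 2) <=
  (-1) ^ m * (sin x / x - / 3 * cos x - sum_f_R0 (term x) m).
Proof.
  intros Hx Hm.
  set (L := sin x / x - / 3 * cos x).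
  assert (HL : Un_cv (fun n => sum_f_R0 (term x) n) L) by (apply series_cv; lra).
  set (b := fun j => a x (m + 1 + j)).
  assert (Hsum : forall N, sum_f_R0 (tg_alt b) N =
           (-1) ^ m * (sum_f_R0 (term x) (m + 1 + N) - sum_f_R0 (term x) m)).
  { intro N. rewrite (tech2 (term x) m (m + 1 + N)) by lia.
    replace (m + 1 + N - S m)%nat with N by lia.
    replace (sum_f_R0 (term x) m + sum_f_R0 (fun i => term x (S m + i)) N - sum_f_R0 (term x) m)
      with (sum_f_R0 (fun i => term x (S m + i)) N) by ring.
    rewrite scal_sum. apply sum_eq. intros i _. unfold tg_alt, b.
    rewrite term_a. replace (S m + i)%nat with (m + 1 + i)%nat by lia.
    replace (m + 1 + i + 1)%nat with (m + i + 2)%nat by lia.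
    rewrite !pow_add. replace ((-1) ^ 2) with 1 by (simpl; ring).
    transitivity ((-1) ^ i * a x (m + 1 + i) * ((-1) ^ m * (-1) ^ m)).
    rewrite neg1_sq; ring. ring. }
  assert (Hdec : Un_decreasing b).
  { intro n. unfold b. replace (m + 1 + S n)%nat with (S (m + 1 + n)) by lia.
    left. apply a_dec; [lra | lia]. }
  assert (Hb0 : Un_cv b 0).
  { intros e He. destruct (HL (e / 2)) as [N HN]; [lra|]. exists N. intros n Hn.
    unfold Rdist, b. rewrite Rminus_0_r.
    assert (E : a x (m + 1 + n) = Rabs (term x (m + 1 + n))).
    { rewrite term_a, Rabs_mult, pow_1_abs, Rmult_1_l, Rabs_right; auto.
      left. apply a_pos; lra || lia. }
    rewrite E, Rabs_right by (apply Rle_ge, Rabs_pos).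
    replace (m + 1 + n)%nat with (S (m + n)) by lia.
    replace (term x (S (m + n))) with
       ((sum_f_R0 (term x) (S (m + n)) - L) - (sum_f_R0 (term x) (m + n) - L)) by (simpl; ring).
    eapply Rle_lt_trans; [apply Rabs_triang|]. rewrite Rabs_Ropp.
    assert (H1 := HN (S (m + n)) ltac:(lia)). assert (H2 := HN (m + n)%nat ltac:(lia)).
    unfold Rdist in H1, H2. lra. }
  assert (Hcv : Un_cv (fun N => sum_f_R0 (tg_alt b) N) ((-1) ^ m * (L - sum_f_R0 (term x) m))).
  { intros e He. destruct (HL e He) as [N HN]. exists N. intros n Hn.
    unfold Rdist. rewrite Hsum.
    replace ((-1) ^ m * (sum_f_R0 (term x) (m + 1 + n) - sum_f_R0 (term x) m) -
        (-1) ^ m * (L - sum_f_R0 (term x) m)) with ((-1) ^ m * (sum_f_R0 (term x) (m + 1 + n) - L)) by ring.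
    rewrite Rabs_mult, pow_1_abs, Rmult_1_l. apply HN. lia. }
  destruct (alternated_series_ineq b _ 0 Hdec Hb0 Hcv) as [H _].
  simpl in H. unfold tg_alt, b in H. simpl in H.
  replace (m + 1 + 0)%nat with (m + 1)%nat in H by lia.
  replace (m + 1 + 1)%nat with (m + 2)%nat in H by lia.
  fold L. lra.
Qed.

Lemma tail_bounds x m : 0 < x < 2 -> (1 <= m)%nat ->
  0 < (-1) ^ m * (sin x / x - / 3 * cos x - sum_f_R0 (term x) m) < a x (m + 1).
Proof.
  intros Hx Hm. split.
  - eapply Rlt_le_trans; [|apply tail_lower; auto].
    replace (m + 2)%nat with (S (m + 1)) by lia.
    assert (a x (S (m + 1)) < a x (m + 1)) by (apply a_dec; lra || lia). lra.
  - assert (H := tail_lower x (S m) Hx ltac:(lia)).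
    assert (a x (S m + 2) < a x (S m + 1)).
    { replace (S m + 2)%nat with (S (S m + 1)) by lia. apply a_dec; lra || lia. }
    change (sum_f_R0 (term x) (S m)) with (sum_f_R0 (term x) m + term x (S m)) in H.
    rewrite term_a in H.
    replace (S m + 1)%nat with (m + 2)%nat in H by lia.
    replace (S m + 2)%nat with (m + 3)%nat in H by lia.
    replace (S m + 2)%nat with (m + 3)%nat in * by lia.
    replace (S m + 1)%nat with (m + 2)%nat in * by lia.
    rewrite pow_add in H. change ((-1) ^ S m) with (-1 * (-1) ^ m) in H.
    replace (S m) with (m + 1)%nat in H by lia.
    assert (E := neg1_sq m).
    set (p := (-1) ^ m) in *. set (D := sin x / x - / 3 * cos x - sum_f_R0 (term x) m).
    replace (-1 * p * (sin x / x - / 3 * cos x - (sum_f_R0 (term x) m + p * (-1) ^ 2 * a x (m + 1))))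
      with (a x (m + 1) - p * D) in H.
    lra. unfold D. simpl. transitivity (-1 * p * (sin x / x - / 3 * cos x - sum_f_R0 (term x) m) + a x (m + 1) * (p * p)).
    rewrite E; ring. ring.
Qed.

Theorem theorem2 :
  (forall (x : R) (n : nat), 0 < x < PI / 2 -> (1 <= n)%nat ->
     Ssum x (2 * n) < sin x / x - (cos x + 2) / 3 < Ssum x (2 * n + 1)) /\
  (forall (x : R) (m : nat), 0 < x < PI / 2 -> (1 <= m)%nat ->
     Rabs (sin x / x - (cos x + 2) / 3 - Ssum x m) < B (m + 1) * x ^ (2 * m + 2)).
Proof.
  assert (P4 := PI_4).
  assert (K : forall x m, (1 <= m)%nat -> sin x / x - (cos x + 2) / 3 - Ssum x m =
      sin x / x - / 3 * cos x - sum_f_R0 (term x) m).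
  { intros x m Hm. rewrite Ssum_eq by auto. lra. }
  assert (Ev : forall n, (-1) ^ (2 * n) = 1).
  { intro n. rewrite pow_mult. rewrite <- (pow1 n). f_equal; ring. }
  split.
  - intros x n Hx Hn. assert (Hx2 : 0 < x < 2) by lra.
    assert (H1 := tail_bounds x (2 * n) Hx2 ltac:(lia)).
    assert (H2 := tail_bounds x (2 * n + 1) Hx2 ltac:(lia)).
    rewrite Ev in H1. rewrite pow_add, Ev in H2. simpl ((-1)^1) in H2.
    assert (K1 := K x (2 * n)%nat ltac:(lia)). assert (K2 := K x (2 * n + 1)%nat ltac:(lia)).
    lra.
  - intros x m Hx Hm. assert (Hx2 : 0 < x < 2) by lra.
    assert (H := tail_bounds x m Hx2 Hm). rewrite K by auto.
    unfold a in H. replace (2 * (m + 1))%nat with (2 * m + 2)%nat in H by lia.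
    set (D := sin x / x - / 3 * cos x - sum_f_R0 (term x) m) in *.
    assert (S1 : Rabs ((-1) ^ m) = 1) by apply pow_1_abs.
    replace (Rabs D) with (Rabs ((-1) ^ m * D)).
    + rewrite Rabs_right by lra. lra.
    + rewrite Rabs_mult, S1. ring.
Qed.
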